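(* Let $G$ be a graph of order $n$ with negative inertia $\nu^-=\nu^-(G)$. For a clique partition $F$ of $G$, let $t_i^F$ be the $i$th largest clique-degree with respect to $F$. Then $$\mathcal E(G)\le 2\min_F\sum_{i=1}^{\nu^-}t_i^F,$$ where the minimum is over all clique partitions $F$ of $G$. Equality holds if $G$ is clique-regular with respect to a minimum clique partition of size $cp(G)=n-\nu^-$.
   Context: All graphs are finite and simple. $\mathcal E(G)$ is the sum of the absolute values of the adjacency eigenvalues of $G$ and $\nu^-(G)$ the number of negative adjacency eigenvalues. A clique partition of $G$ is a set $F$ of cliques (sets of pairwise adjacent vertices) such that every edge lies in exactly one clique of $F$; $cp(G)$ is the minimum size of a clique partition, and a minimum clique partition is one of that size. The clique-degree of a vertex is the number of cliques of $F$ containing it; $G$ is clique-regular with respect to $F$ if all clique-degrees are equal. *)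

(* Defs.v *)
From mathcomp Require Import all_boot all_order all_algebra all_field.
Set Implicit Arguments. Unset Strict Implicit. Unset Printing Implicit Defensive.
Import Order.TTheory GRing.Theory Num.Theory.
Local Open Scope ring_scope.

Definition simple_graph (n : nat) (e : rel 'I_n) : Prop :=
  symmetric e /\ irreflexive e.

Definition adjmx (n : nat) (e : rel 'I_n) : 'M[algC]_n :=
  \matrix_(i, j) (e i j)%:R.

(* The eigenvalues (with multiplicity) of a square complex matrix: the roots
   of its (monic) characteristic polynomial, listed with multiplicity. *)
Definition eigenvalues (n : nat) (A : 'M[algC]_n) : seq algC :=
  sval (closed_field_poly_normal (char_poly A)).

Definition energy (n : nat) (e : rel 'I_n) : algC :=
  \sum_(z <- eigenvalues (adjmx e)) `|z|.

Definition neg_inertia (n : nat) (e : rel 'I_n) : nat :=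
  count (fun z : algC => z < 0) (eigenvalues (adjmx e)).

Definition is_clique (n : nat) (e : rel 'I_n) (C : {set 'I_n}) : bool :=
  [forall x in C, forall y in C, (x != y) ==> e x y].

Definition clique_partition (n : nat) (e : rel 'I_n) (F : {set {set 'I_n}}) : bool :=
  [forall C in F, is_clique e C] &&
  [forall x, forall y, e x y ==> (#|[set C in F | (x \in C) && (y \in C)]| == 1%N)].

Definition clique_degree (n : nat) (F : {set {set 'I_n}}) (v : 'I_n) : nat :=
  #|[set C in F | v \in C]|.

Definition clique_regular (n : nat) (F : {set {set 'I_n}}) : Prop :=
  forall u v, clique_degree F u = clique_degree F v.

Definition top_degree_sum (n : nat) (F : {set {set 'I_n}}) (k : nat) : nat :=
  (\sum_(d <- take k (sort geq [seq clique_degree F v | v <- enum 'I_n])) d)%N.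

(* The partition of the edge set into 2-cliques (a clique partition of any
   simple graph); used only as the neutral element of the minima below. *)
Definition edge_partition (n : nat) (e : rel 'I_n) : {set {set 'I_n}} :=
  [set [set x; y] | x in 'I_n, y in 'I_n & e x y].

Definition min_top_degree_sum (n : nat) (e : rel 'I_n) (k : nat) : nat :=
  \big[minn/top_degree_sum (edge_partition e) k]_(F : {set {set 'I_n}} |
     clique_partition e F) top_degree_sum F k.

Definition clique_partition_number (n : nat) (e : rel 'I_n) : nat :=
  \big[minn/#|edge_partition e|]_(F : {set {set 'I_n}} | clique_partition e F) #|F|.

(* Main.v *)
Require Import Defs.
From mathcomp Require Import all_boot all_order all_algebra all_field.
From mathcomp Require Import zify.
Import Order.TTheory GRing.Theory Num.Theory.
Local Open Scope ring_scope.
Local Open Scope sesquilinear_scope.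

Lemma bigmin_le_seq (T : eqType) (r : seq T) (P : pred T) (f : T -> nat) x0 j :
  j \in r -> P j -> (\big[minn/x0]_(i <- r | P i) f i <= f j)%N.
Proof.
elim: r => // a r IH; rewrite in_cons big_cons => /orP [/eqP<-|jr] Pj.
  by rewrite Pj geq_minl.
case: (P a); last exact: IH.
by rewrite geq_min IH ?orbT.
Qed.

Lemma bigmin_le (T : finType) (P : pred T) (f : T -> nat) x0 j :
  P j -> (\big[minn/x0]_(i | P i) f i <= f j)%N.
Proof. by move=> Pj; apply: bigmin_le_seq => //; rewrite mem_index_enum. Qed.

Lemma geq_total_ : total geq.
Proof. by move=> x y; rewrite /= orbC leq_total. Qed.

Lemma topk_thresh (m : nat) (deg : 'I_m -> nat) (k : nat) : (k <= m)%N ->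
  exists tau : nat,
  ((\sum_u (deg u - tau)) + tau * k =
   \sum_(d <- take k (sort geq [seq deg v | v <- enum 'I_m])) d)%N.
Proof.
move=> km.
set s := sort geq _.
have ss : size s = m by rewrite size_sort size_map size_enum_ord.
have sorted_s : sorted geq s by apply: sort_sorted; exact: geq_total_.
have Hsum : forall g : nat -> nat, (\sum_u g (deg u) = \sum_(x <- s) g x)%N.
  move=> g; rewrite [RHS](perm_big [seq deg v | v <- enum 'I_m]).
    by rewrite big_map big_enum.
  exact: permEl (perm_sort _ _).
case: k km => [|k] km.
  exists (\sum_u deg u)%N; rewrite muln0 addn0 take0 big_nil.
  apply/eqP; rewrite sum_nat_eq0; apply/forallP => u; apply/implyP => _.
  rewrite subn_eq0; rewrite (bigD1 u) //=; exact: leq_addr.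
exists (nth 0%N s k).
rewrite (Hsum (fun x => x - nth 0%N s k)%N).
rewrite (big_nth 0%N) ss (big_cat_nat (leq0n k.+1) km) /=.
have trg : transitive geq by move=> b a c h1 h2; exact: leq_trans h2 h1.
have Hnth : forall i j, (i <= j)%N -> (j < m)%N -> (nth 0 s j <= nth 0 s i)%N.
  move=> i j ij jm; apply: (sorted_leq_nth trg leqnn 0%N sorted_s) => //.
    by rewrite inE ss (leq_ltn_trans ij jm).
  by rewrite inE ss.
have -> : (\sum_(k.+1 <= i < m) (nth 0 s i - nth 0 s k) = 0)%N.
  rewrite big_nat_cond big1 // => i /andP[/andP[ki im] _].
  by apply/eqP; rewrite subn_eq0 Hnth // ltnW.
rewrite addn0 [RHS](big_nth 0%N) size_takel ?ss //.
have -> : (nth 0 s k * k.+1 = \sum_(0 <= i < k.+1) nth 0 s k)%N.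
  by rewrite sum_nat_const_nat subn0; exact: mulnC.
have -> : (\sum_(0 <= i < k.+1) nth 0 (take k.+1 s) i =
    \sum_(0 <= i < k.+1) ((nth 0 s i - nth 0 s k) + nth 0 s k))%N.
  rewrite [LHS]big_nat_cond [RHS]big_nat_cond; apply: eq_bigr => i /andP[/andP[_ ik] _].
  rewrite (nth_take _ ik) subnK; first reflexivity.
  apply: Hnth; first by rewrite -ltnS.
  exact: km.
by rewrite big_split.
Qed.

Lemma rank_diag_ge (F : fieldType) m (v : 'rV[F]_m) :
  (#|[set i | v ord0 i != 0%R]| <= \rank (diag_mx v))%N.
Proof.
set S := [set i | v ord0 i != 0].
pose f := fun a : 'I_#|S| => (enum_val a : 'I_m).
have E : mxsub f f (diag_mx v) = diag_mx (\row_a v 0 (f a)).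
  by apply/matrixP => a b; rewrite !mxE (inj_eq enum_val_inj).
have U : diag_mx (\row_a v 0 (f a)) \in unitmx.
  rewrite unitmxE det_diag unitfE; apply/prodf_neq0 => a _; rewrite mxE.
  by have := enum_valP a; rewrite inE.
have <- : \rank (mxsub f f (diag_mx v)) = #|S| by rewrite E mxrank_unit.
rewrite mxsubrc; apply: leq_trans (mxrankS (rowsub_sub _ _)) _.
rewrite -mxrank_tr.
have -> : (colsub f (diag_mx v))^T = rowsub f (diag_mx v)^T by rewrite trmx_mxsub.
by rewrite (leq_trans (mxrankS (rowsub_sub _ _))) // mxrank_tr.
Qed.

Lemma char_poly_unitary_conj (F : fieldType) m (P Q D : 'M[F]_m) :
  Q *m P = 1%:M -> char_poly (Q *m D *m P) = char_poly D.
Proof.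
move=> QP.
rewrite /char_poly /char_poly_mx.
have -> : 'X%:M - map_mx polyC (Q *m D *m P) =
   map_mx polyC Q *m ('X%:M - map_mx polyC D) *m map_mx polyC P.
  rewrite mulmxBr mulmxBl -!map_mxM; congr (_ - _).
  by rewrite mul_mx_scalar -scalemxAl -map_mxM QP map_mx1 scalemx1.
by rewrite !det_mulmx mulrAC -det_mulmx -map_mxM QP map_mx1 det1 mul1r.
Qed.

Section Main.
Variables (n : nat) (e : rel 'I_n).
Hypothesis He : simple_graph e.
Local Notation A := (adjmx e).

Lemma adj_herm : A \is hermsymmx.
Proof.
apply/is_hermitianmxP; rewrite expr0 scale1r; apply/matrixP => i j.
by rewrite !mxE conjC_nat; case: He => sym _; rewrite sym.
Qed.

Definition P := spectralmx A.
Definition d := spectral_diag A.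

Lemma PPt : P *m P^t* = 1%:M.
Proof. exact/unitarymxP/spectral_unitarymx. Qed.

Lemma PtP : P^t* *m P = 1%:M.
Proof. exact: mulmx1C PPt. Qed.

Lemma A_eq : A = P^t* *m diag_mx d *m P.
Proof.
have /orthomx_spectralP E := hermitian_normalmx adj_herm.
by rewrite /P /d {1}E invmx_unitary // spectral_unitarymx.
Qed.

Lemma diag_eq : P *m A *m P^t* = diag_mx d.
Proof. by rewrite A_eq !mulmxA PPt mul1mx -mulmxA PPt mulmx1. Qed.

Lemma d_real i : d 0 i \is Num.real.
Proof. exact: (mxOverP (hermitian_spectral_diag_real adj_herm)). Qed.

Lemma eig_perm : perm_eq (eigenvalues A) [seq d 0 i | i <- enum 'I_n].
Proof.
rewrite /eigenvalues; case: closed_field_poly_normal => r /= Hr.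
have cp : char_poly A = \prod_(i < n) ('X - (d 0 i)%:P).
  rewrite [in LHS]A_eq char_poly_unitary_conj ?PtP //.
  rewrite char_poly_trig ?diag_mx_is_trig //.
  by apply: eq_bigr => i _; rewrite mxE eqxx mulr1n.
move: Hr; rewrite (monicP (char_poly_monic A)) scale1r cp => Hr.
apply: prod_XsubC_eq; rewrite -Hr big_map big_enum /=.
by apply: eq_bigl => i; rewrite inE.
Qed.

Lemma energyE : energy e = \sum_i `|d 0 i|.
Proof.
rewrite /energy (perm_big _ eig_perm) big_map big_enum /=.
by apply: eq_bigl => i; rewrite inE.
Qed.

Definition Nset := [set i | d 0 i < 0].

Lemma neg_inertiaE : neg_inertia e = #|Nset|.
Proof.
rewrite /neg_inertia.
have /permP -> := eig_perm.
rewrite -sum1_count big_map big_enum_cond /= -sum1_card.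
by apply: eq_bigl => i; rewrite !inE.
Qed.


Lemma trace0 : \sum_i d 0 i = 0.
Proof.
rewrite -mxtrace_diag -diag_eq -mulmxA mxtrace_mulC -mulmxA PtP mulmx1.
rewrite /mxtrace big1 // => i _; rewrite mxE.
by case: He => _ irr; rewrite irr.
Qed.

Lemma energy_neg : energy e = (- \sum_(i in Nset) d 0 i) *+ 2.
Proof.
rewrite energyE (bigID (mem Nset)) /=.
have E1 : \sum_(i in Nset) `|d 0 i| = - \sum_(i in Nset) d 0 i.
  rewrite -sumrN; apply: eq_bigr => i; rewrite inE => H; exact: ltr0_norm.
have E2 : \sum_(i | i \notin Nset) `|d 0 i| = \sum_(i | i \notin Nset) d 0 i.
  apply: eq_bigr => i; rewrite inE => H; apply: ger0_norm.
  by rewrite real_leNgt ?d_real ?real0.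
have := trace0; rewrite (bigID (mem Nset)) /= => T0.
rewrite E1 E2 mulr2n; congr (_ + _).
by apply/eqP; rewrite -addr_eq0 addrC T0.
Qed.

Definition w u := \sum_(i in Nset) P i u * (P i u)^*.

Lemma w_ge0 u : 0 <= w u.
Proof. by apply: sumr_ge0 => i _; exact: mul_conjC_ge0. Qed.

Lemma w_le1 u : w u <= 1.
Proof.
have E : \sum_i P i u * (P i u)^* = 1.
  have := congr1 (fun X : 'M[algC]_n => X u u) PtP; rewrite !mxE eqxx mulr1n => <-.
  by apply: eq_bigr => i _; rewrite !mxE mulrC.
rewrite -E (bigID (mem Nset)) /= lerDl.
by apply: sumr_ge0 => i _; exact: mul_conjC_ge0.
Qed.

Lemma w_sum : \sum_u w u = #|Nset|%:R.
Proof.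
rewrite /w exchange_big /= -sumr_const; apply: eq_bigr => i _.
have := congr1 (fun X : 'M[algC]_n => X i i) PPt; rewrite !mxE eqxx mulr1n => <-.
by apply: eq_bigr => u _; rewrite !mxE.
Qed.

Lemma thresh_bound (deg : 'I_n -> nat) (tau : nat) :
  \sum_u (deg u)%:R * w u <= \sum_u (deg u - tau)%:R + tau%:R * #|Nset|%:R.
Proof.
rewrite -w_sum mulr_sumr -big_split /=; apply: ler_sum => u _.
case: (leqP tau (deg u)) => Ht.
  rewrite natrB // -[X in X * w u](subrK tau%:R) mulrDl lerD2r.
  by apply: ler_piMr; [rewrite subr_ge0 ler_nat | exact: w_le1].
have -> : (deg u - tau)%N = 0%N by apply/eqP; rewrite subn_eq0 ltnW.
by rewrite add0r ler_wpM2r ?w_ge0 // ler_nat ltnW.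
Qed.

Section CP.
Variable F : {set {set 'I_n}}.
Hypothesis HF : clique_partition e F.

Local Notation deg := (clique_degree F).

Lemma cp_count (u v : 'I_n) :
  (e u v + deg u * (u == v) = #|[set C in F | (u \in C) && (v \in C)]|)%N.
Proof.
case/andP: HF => /forallP Hcl /forallP Hpart.
case: He => sym irr.
have [<-|uv] := eqVneq u v.
  rewrite irr muln1 add0n /clique_degree; apply: eq_card => C.
  by rewrite !inE andbb.
rewrite muln0 addn0.
case euv: (e u v).
  by have := implyP (forallP (Hpart u) v) euv => /eqP ->.
apply/esym/eqP; rewrite cards_eq0; apply/eqP/setP => C; rewrite !inE.
apply/negbTE/andP => -[CF /andP[uC vC]].
have := implyP (Hcl C) CF => /forallP /(_ u) /implyP /(_ uC) /forallP /(_ v).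
by rewrite vC uv euv.
Qed.

Definition Mx : 'M[algC]_(n, #|F|) :=
  \matrix_(u, j) ((u \in (enum_val j : {set 'I_n})) : nat)%:R.

Lemma MMt : A + diag_mx (\row_u (deg u)%:R) = Mx *m Mx^T.
Proof.
apply/matrixP => u v; rewrite !mxE.
rewrite -mulrnA -natrD cp_count.
under eq_bigr => j _ do rewrite !mxE -natrM mulnb.
rewrite -(big_enum_val (A := mem F) (fun C => ((u \in C) && (v \in C) : nat)%:R)).
rewrite -natr_sum; congr (_%:R).
rewrite big_mkcond /= -sum1_card big_mkcond /=.
by apply: eq_bigr => C _; rewrite !inE; case: (C \in F).
Qed.

Lemma Mx_conj : Mx^t* = Mx^T.
Proof. by apply/matrixP => j u; rewrite !mxE conjC_nat. Qed.

Lemma psd_row i : 0 <= d 0 i + \sum_u (deg u)%:R * (P i u * (P i u)^*).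
Proof.
set R := P *m Mx.
have H : R *m R^t* = diag_mx d + P *m diag_mx (\row_u (deg u)%:R) *m P^t*.
  rewrite /R trmx_mul map_mxM Mx_conj mulmxA -(mulmxA P Mx) -MMt.
  by rewrite mulmxDr mulmxDl diag_eq.
rewrite mul_mx_diag in H.
have E := congr1 (fun X : 'M[algC]_n => X i i) H.
have -> : d 0 i + \sum_u (deg u)%:R * (P i u * (P i u)^*) =
  (diag_mx d + \matrix_(i0, j) (P i0 j * (\row_u (deg u)%:R) 0 j) *m P^t*) i i.
  rewrite !mxE eqxx mulr1n; congr (_ + _); apply: eq_bigr => u _.
  by rewrite !mxE mulrA [_ * P i u]mulrC.
rewrite -E mxE; apply: sumr_ge0 => j _; rewrite !mxE.
exact: mul_conjC_ge0.
Qed.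

Definition Wdeg := \sum_u (deg u)%:R * w u.

Lemma neg_bound : - \sum_(i in Nset) d 0 i <= Wdeg.
Proof.
have : 0 <= \sum_(i in Nset) (d 0 i + \sum_u (deg u)%:R * (P i u * (P i u)^*)).
  by apply: sumr_ge0 => i _; exact: psd_row.
rewrite big_split /= exchange_big /=.
have -> : \sum_j \sum_(i in Nset) (deg j)%:R * (P i j * (P i j)^*) = Wdeg.
  by apply: eq_bigr => u _; rewrite /w mulr_sumr.
by move=> H; rewrite -subr_ge0 opprK addrC.
Qed.

Lemma energy_le_top : energy e <= (2 * top_degree_sum F (neg_inertia e))%:R.
Proof.
have km : (#|Nset| <= n)%N by rewrite -[n in (_ <= n)%N]card_ord max_card.
have [tau Htau] := @topk_thresh n deg #|Nset| km.
rewrite energy_neg neg_inertiaE /top_degree_sum -Htau natrM mulr_natl.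
have H : - \sum_(i in Nset) d 0 i <=
    ((\sum_u (deg u - tau)) + tau * #|Nset|)%N%:R.
  apply: le_trans (neg_bound) _; rewrite natrD natr_sum natrM.
  exact: thresh_bound.
by rewrite !mulr2n lerD.
Qed.

Lemma top_le_const t k : (forall u, deg u = t) ->
  (top_degree_sum F k <= k * t)%N.
Proof.
move=> Ht; rewrite /top_degree_sum.
set s := sort geq _.
have Hs : forall x, x \in take k s -> x = t.
  move=> x /mem_take; rewrite mem_sort => /mapP [u _ ->]; exact: Ht.
rewrite (eq_big_seq (fun=> t)) //.
rewrite big_const_seq count_predT iter_addn_0 mulnC leq_mul2r.
by rewrite size_take_min geq_minl orbT.
Qed.

Lemma rank_part t : (forall u, deg u = t) ->
  (#|[set i | (d ord0 i + t%:R != 0)%R]| <= #|F|)%N.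
Proof.
move=> Ht.
pose v : 'rV[algC]_n := \row_i (d 0 i + t%:R).
have Dt : diag_mx (\row_u (deg u)%:R) = (t%:R)%:M :> 'M[algC]_n.
  by apply/matrixP => a b; rewrite !mxE Ht.
have Ev : diag_mx v = P *m Mx *m (Mx^T *m P^t*).
  rewrite mulmxA -(mulmxA P Mx) -MMt Dt mulmxDr mulmxDl diag_eq.
  rewrite scalar_mxC -mulmxA PPt mulmx1.
  by apply/matrixP => a b; rewrite !mxE; case: (a == b); rewrite ?mulr1n ?mulr0n ?addr0.
have := @rank_diag_ge _ _ v.
have -> : [set i | v ord0 i != 0] = [set i | d ord0 i + t%:R != 0].
  by apply/setP => i; rewrite !inE mxE.
move/leq_trans; apply; rewrite Ev.
apply: leq_trans (mxrankM_maxl _ _) _; exact: rank_leq_col.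
Qed.

Lemma energy_ge0 : 0 <= energy e.
Proof. by rewrite energyE; apply: sumr_ge0 => i _; exact: normr_ge0. Qed.

Lemma energy_ge_top (Hreg : clique_regular F)
  (Hsz : #|F| = (n - #|Nset|)%N) :
  (2 * top_degree_sum F #|Nset|)%:R <= energy e.
Proof.
case: (pickP (mem Nset)) => [i0 i0N|none].
  pose t := deg i0.
  have Ht : forall u, deg u = t by move=> u; exact: Hreg.
  apply: (@le_trans _ _ (2 * (#|Nset| * t))%:R).
    by rewrite ler_nat leq_mul2l top_le_const ?orbT.
  rewrite energy_neg natrM mulr_natl !mulr2n.
  suff H : (#|Nset| * t)%:R <= - \sum_(i in Nset) d 0 i by apply: lerD.
  have [t0|tpos] := eqVneq t 0%N.
    rewrite t0 muln0 -sumrN; apply: sumr_ge0 => i; rewrite inE => H.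
    by rewrite oppr_ge0 ltW.
  set Z := [set i | d 0 i + t%:R == 0].
  have sZN : Z \subset Nset.
    apply/subsetP => i; rewrite !inE addr_eq0 => /eqP ->.
    by rewrite oppr_lt0 ltr0n lt0n.
  have HC : ~: Z = [set i | (d ord0 i + t%:R != 0)%R].
    by apply/setP => i; rewrite !inE.
  have Hr := @rank_part t Ht; rewrite -HC Hsz in Hr.
  have Hc := cardsC Z; rewrite card_ord in Hc.
  have km : (#|Nset| <= n)%N by rewrite -[n in (_ <= n)%N]card_ord max_card.
  have ZN : (#|Nset| <= #|Z|)%N by lia.
  have NZ : Nset \subset Z.
    rewrite -(subset_leqif_card sZN).2 eqn_leq ZN andbT.
    exact: subset_leq_card.
  have -> : \sum_(i in Nset) d 0 i = \sum_(i in Nset) (- t%:R).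
    apply: eq_bigr => i iN; have := subsetP NZ i iN.
    by rewrite inE addr_eq0 => /eqP.
  by rewrite sumrN opprK sumr_const mulnC natrM mulr_natr lexx.
have N0 : #|Nset| = 0%N by apply: eq_card0.
by rewrite N0 /top_degree_sum take0 big_nil muln0 energy_ge0.
Qed.

End CP.

Lemma edgeP C :
  reflect (exists x y, e x y /\ C = [set x; y]) (C \in edge_partition e).
Proof.
apply: (iffP imset2P) => [[x y _]|[x [y [exy ->]]]].
  by rewrite inE => exy ->; exists x, y.
by apply: (@Imset2spec _ _ _ _ _ _ _ x y) => //; rewrite inE.
Qed.

Lemma edge_cp : clique_partition e (edge_partition e).
Proof.
case: He => sym irr.
apply/andP; split.
  apply/forallP => C; apply/implyP => /edgeP [x [y [exy ->]]].
  apply/forallP => a; apply/implyP; rewrite !inE => /orP[]/eqP->;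
  apply/forallP => b; apply/implyP; rewrite !inE => /orP[]/eqP->;
  by rewrite ?eqxx //= ?[e y x]sym exy implybT.
apply/forallP => a; apply/forallP => b; apply/implyP => eab.
have ab : a != b by apply: contraTneq eab => ->; rewrite irr.
have -> : [set C in edge_partition e | (a \in C) && (b \in C)] = [set [set a; b]].
  apply/setP => C; rewrite !inE; apply/andP/eqP.
    case=> /edgeP [x [y [exy ->]]]; rewrite !inE.
    case/andP => /orP[]/eqP Ha /orP[]/eqP Hb; move: ab;
    by rewrite Ha Hb ?eqxx // => _; rewrite setUC.
  move=> ->; split; first by apply/edgeP; exists a, b.
  by rewrite !inE !eqxx orbT.
by rewrite cards1.
Qed.

End Main.

Theorem mainTheorem12 (n : nat) (e : rel 'I_n) :
  simple_graph e ->
  energy e <= (2 * min_top_degree_sum e (neg_inertia e))%:R /\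
  ((exists F : {set {set 'I_n}},
      [/\ clique_partition e F,
          #|F| = clique_partition_number e,
          clique_partition_number e = (n - neg_inertia e)%N &
          clique_regular F]) ->
   energy e = (2 * min_top_degree_sum e (neg_inertia e))%:R).
Proof.
move=> He.
have H1 : energy e <= (2 * min_top_degree_sum e (neg_inertia e))%:R.
  rewrite /min_top_degree_sum.
  apply: (big_ind (fun x => energy e <= (2 * x)%:R)).
  - exact: energy_le_top _ _ He _ (edge_cp _ _ He).
  - by move=> x y Hx Hy; rewrite /minn; case: ifP.
  - by move=> F HF; exact: energy_le_top _ _ He _ HF.
split => // -[F [HF Hsz Hcp Hreg]].
apply/le_anti; rewrite H1 /=.
apply: (@le_trans _ _ (2 * top_degree_sum F (neg_inertia e))%:R).
  by rewrite ler_nat leq_mul2l bigmin_le ?orbT.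
rewrite (neg_inertiaE _ _ He); apply: (energy_ge_top _ _ He _ HF) => //.
by rewrite Hsz Hcp (neg_inertiaE _ _ He).
Qed.
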